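(* Let $X,Y$ be Banach spaces and $f:X\to Y$ a map. Suppose there exist a closed ball $B_r$ of radius $r>0$ in $X$, a closed ball $B_s$ of radius $s\ge0$ in $Y$, and a compact set $K\subseteq Y$ such that $f(B_r)\subseteq K+B_s$. Then $$\varphi_f(r):=\inf\{\|f(x)-f(y)\|: x,y\in X,\ \|x-y\|\ge r\}\le 2s.$$
   Context: All Banach spaces are real and infinite-dimensional. $K+B_s=\{k+b: k\in K, b\in B_s\}$. *)

(* Defs.v *)
From HB Require Import structures.
From mathcomp Require Import all_boot all_order all_algebra.
From mathcomp Require Import all_classical all_reals all_analysis.
Set Implicit Arguments. Unset Strict Implicit. Unset Printing Implicit Defensive.
Import Order.TTheory GRing.Theory Num.Theory numFieldNormedType.Exports.
Local Open Scope classical_set_scope.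
Local Open Scope ring_scope.

(* Closed ball {y | ||y - c|| <= r} in a normed space (also correct for r = 0). *)
Definition cball {R : realType} {V : normedModType R} (c : V) (r : R) : set V :=
  closed_ball_ (fun v : V => `|v|) c r.

Definition minkowski_sum {R : realType} {V : normedModType R} (A B : set V) : set V :=
  [set z | exists a b, A a /\ B b /\ z = a + b].

Definition infinite_dim {R : realType} (V : normedModType R) : Prop :=
  forall s : seq V, exists x : V,
    forall c : seq R, x <> \sum_(i < size s) c`_i *: s`_i.

Definition phi_mod {R : realType} {X Y : normedModType R} (f : X -> Y) (r : R) : R :=
  inf [set d | exists x y : X, `|x - y| >= r /\ d = `|f x - f y|].

(* Main.v *)
Require Import Defs.
From HB Require Import structures.
From mathcomp Require Import all_boot all_order all_algebra.
From mathcomp Require Import all_classical all_reals all_analysis.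
From mathcomp Require Import lra.
Set Implicit Arguments. Unset Strict Implicit. Unset Printing Implicit Defensive.
Import Order.TTheory GRing.Theory Num.Theory numFieldNormedType.Exports.
Local Open Scope classical_set_scope.
Local Open Scope ring_scope.

Definition lcf {R : realType} {X : normedModType R} (s : seq X) (c : nat -> R) : X :=
  \sum_(i < size s) c i *: s`_i.

Lemma lcf_cons (R : realType) (X : normedModType R) (w : X) s c :
  lcf (w :: s) c = c 0%N *: w + lcf s (fun i => c i.+1).
Proof. by rewrite /lcf /= big_ord_recl. Qed.

Lemma lcf_lin (R : realType) (X : normedModType R) (s : seq X) c d t :
  lcf s (fun i => c i + t * d i) = lcf s c + t *: lcf s d.
Proof.
rewrite /lcf scaler_sumr -big_split /=; apply: eq_bigr => i _.
by rewrite scalerDl scalerA.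
Qed.

Lemma lcfZ (R : realType) (X : normedModType R) (s : seq X) d t :
  lcf s (fun i => t * d i) = t *: lcf s d.
Proof.
rewrite /lcf scaler_sumr; apply: eq_bigr => i _; by rewrite scalerA.
Qed.

Lemma lcf0 (R : realType) (X : normedModType R) (s : seq X) :
  lcf s (fun _ => 0) = 0.
Proof. by rewrite /lcf big1 // => i _; rewrite scale0r. Qed.

Lemma lcf_nth (R : realType) (X : normedModType R) (s : seq X) i :
  (i < size s)%N -> lcf s (fun j => (j == i)%:R) = s`_i.
Proof.
move=> hi; rewrite /lcf (bigD1 (Ordinal hi)) //= eqxx scale1r big1 ?addr0 //.
move=> j hj; suff -> : (nat_of_ord j == i) = false by rewrite scale0r.
by apply/negbTE; apply: contra hj => /eqP hj; apply/eqP/val_inj.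
Qed.

Lemma lip_cont (R : realType) (g : R -> R) (L : R) : 0 <= L ->
  (forall t t', g t <= g t' + `|t - t'| * L) -> continuous g.
Proof.
move=> L0 hg x; apply/cvgrPdist_le => e e0.
have hL : 0 < L + 1 by rewrite ltr_wpDl.
near=> t.
have h1 : `|g x - g t| <= `|x - t| * L.
  have := hg t x; have := hg x t; rewrite (distrC t x) => ha hb.
  rewrite ler_norml; apply/andP; split; lra.
apply: (le_trans h1).
have : `|x - t| <= e / (L + 1).
  near: t; apply/nbhs_ballP; exists (e / (L+1)); first by rewrite /= divr_gt0.
  by move=> t /= /ltW.
move=> h2; apply: le_trans (ler_wpM2r L0 h2) _.
rewrite mulrAC ler_pdivrMr // ler_wpM2l ?ltW //; lra.
Unshelve. all: by end_near. Qed.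

Lemma attain (R : realType) (X : normedModType R) (s : seq X) :
  forall v : X, exists c, forall c', `|v - lcf s c| <= `|v - lcf s c'|.
Proof.
elim: s => [|w s IH] v.
  by exists (fun _ => 0) => c'; rewrite /lcf !big_ord0.
have [[cw hw]|nw] := pselect (exists cw, w = lcf s cw).
  have [c hc] := IH v.
  exists (fun i => if i is j.+1 then c j else 0) => c'.
  rewrite !lcf_cons scale0r add0r.
  have -> : c' 0%N *: w + lcf s (fun i => c' i.+1) =
            lcf s (fun i => c' i.+1 + c' 0%N * cw i) by rewrite lcf_lin hw addrC.
  exact: hc.
have [cw hcw] := IH w.
set d := `|w - lcf s cw|.
have d0 : 0 < d.
  rewrite normr_gt0 subr_eq0; apply/eqP => h; apply: nw; by exists cw.
have key : forall t c, `|t| * d <= `|t *: w - lcf s c|.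
  move=> t c; have [->|t0] := eqVneq t 0.
    by rewrite normr0 mul0r.
  have -> : t *: w - lcf s c = t *: (w - lcf s (fun i => t^-1 * c i)).
    by rewrite lcfZ scalerBr scalerA mulfV // scale1r.
  by rewrite normrZ ler_wpM2l.
have [ct hct] := choice (fun t => IH (v - t *: w)).
pose g t := `|v - t *: w - lcf s (ct t)|.
have lip : forall t t', g t <= g t' + `|t - t'| * `|w|.
  move=> t t'; rewrite /g.
  apply: le_trans (hct t (ct t')) _.
  have -> : v - t *: w - lcf s (ct t') = (v - t' *: w - lcf s (ct t')) + (t' - t) *: w.
    rewrite scalerBl; set A := t *: w; set B := t' *: w; set L := lcf _ _.
    by rewrite [RHS]addrC addrA [_ + (v - B)]addrC addrA subrK.
  by apply: le_trans (ler_normD _ _) _; rewrite normrZ (distrC t).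
have gc : continuous g := lip_cont (normr_ge0 _) lip.
pose T := 2 * `|v| / d.
have T0 : 0 <= T by rewrite /T; apply: divr_ge0; [apply: mulr_ge0|apply: ltW].
have hT : -T <= T by lra.
have gcw : {within `[-T, T], continuous g} by apply: continuous_subspaceT.
have [t0 t0in ht0] := EVT_min hT gcw.
exists (fun i => if i is j.+1 then ct t0 j else t0) => c'.
have e1 : forall t c, v - (t*:w + lcf s c) = v - t*:w - lcf s c.
  by move=> t c; rewrite opprD addrA.
rewrite !lcf_cons /= !e1.
set t := c' 0%N; set dd := (fun i => c' i.+1).
have -> : `|v - t0 *: w - lcf s (fun i => ct t0 i)| = g t0 by [].
case: (boolP (t \in `[-T, T])) => tin.
  by apply: le_trans (ht0 _ tin) _; apply: hct.
move: tin; rewrite in_itv /= -ler_norml -ltNge => tT.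
have g0 : g t0 <= g 0 by apply: ht0; rewrite in_itv /= -ler_norml normr0.
have g0v : g 0 <= `|v|.
  by apply: le_trans (hct 0 (fun _ => 0)) _; rewrite scale0r lcf0 !subr0.
have lcfN : lcf s (fun i => - dd i) = - lcf s dd.
  by rewrite /lcf -sumrN; apply: eq_bigr => i _; rewrite scaleNr.
have k1 := key t (fun i => - dd i).
rewrite lcfN opprK in k1.
have k2 : `|t *: w + lcf s dd| <= `|v - (t *: w + lcf s dd)| + `|v|.
  set z := t *: w + lcf s dd.
  have := ler_normB v (v - z).
  have e : v - (v - z) = z by rewrite opprB addrC subrK.
  by rewrite e addrC.
rewrite e1 in k2.
have Td : T * d = 2 * `|v| by rewrite /T divfK // gt_eqF.
have tTd : T * d <= `|t| * d by rewrite ler_pM2r // ltW.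
lra.
Qed.

Lemma riesz_step (R : realType) (X : normedModType R) (hX : infinite_dim X)
  (s : seq X) : exists u : X, `|u| = 1 /\ forall c, 1 <= `|u - lcf s c|.
Proof.
have [x hx] := hX s.
have nx : forall c, x <> lcf s c.
  move=> c h; apply: (hx (mkseq c (size s))); rewrite h /lcf.
  by apply: eq_bigr => i _; rewrite nth_mkseq.
have [c0 hc0] := attain s x.
set d := `|x - lcf s c0|.
have d0 : 0 < d by rewrite normr_gt0 subr_eq0; apply/eqP; exact: nx.
exists (d^-1 *: (x - lcf s c0)); split.
  by rewrite normrZ ger0_norm ?invr_ge0 ?ltW // mulVf // gt_eqF.
move=> c.
have -> : d^-1 *: (x - lcf s c0) - lcf s c = d^-1 *: (x - lcf s (fun i => c0 i + d * c i)).
  rewrite lcf_lin scalerBr opprD addrA scalerBr scalerA mulVf ?gt_eqF // scale1r.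
  by rewrite scalerBr.
have di : 0 <= d^-1 by rewrite invr_ge0 ltW.
rewrite normrZ ger0_norm // -(mulVf (lt0r_neq0 d0)).
by apply: ler_wpM2l => //; apply: hc0.
Qed.

Fixpoint iterseq {T : Type} (G : seq T -> T) (n : nat) : seq T :=
  if n is m.+1 then rcons (iterseq G m) (G (iterseq G m)) else [::].

Lemma size_iterseq T (G : seq T -> T) n : size (iterseq G n) = n.
Proof. by elim: n => //= n IH; rewrite size_rcons IH. Qed.

Lemma nth_iterseq T (G : seq T -> T) x0 n m : (m < n)%N ->
  nth x0 (iterseq G n) m = G (iterseq G m).
Proof.
elim: n => // n IH; rewrite ltnS leq_eqVlt => /orP [/eqP ->|hm] /=.
  by rewrite nth_rcons size_iterseq ltnn eqxx.
by rewrite nth_rcons size_iterseq hm IH.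
Qed.

Lemma compact_cluster_seq (R : realType) (Y : normedModType R) (K : set Y)
  (k : nat -> Y) : compact K -> (forall n, K (k n)) ->
  exists p : Y, forall e, 0 < e -> forall N, exists n, (N <= n)%N /\ `|p - k n| < e.
Proof.
move=> hK hk.
have FK : (k @ \oo) K.
  by exists 0%N => // n _; apply: hk.
have [p [Kp cp]] := hK _ _ FK.
exists p => e e0 N.
have hA : (k @ \oo) [set y | exists n, (N <= n)%N /\ y = k n].
  by exists N => // n /= hn; exists n.
have hB : nbhs p (ball p e) by apply: nbhsx_ballx.
have [y [[n [hn ->]] hb]] := cp _ _ hA hB.
exists n; split => //.
by move: hb; rewrite -ball_normE.
Qed.

Theorem lemma4p3 (R : realType) (X Y : completeNormedModType R)
  (hX : infinite_dim X) (hY : infinite_dim Y) (f : X -> Y)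
  (a : X) (r : R) (b : Y) (s : R) (K : set Y)
  (hr : 0 < r) (hs : 0 <= s) (hK : compact K)
  (hf : f @` cball a r `<=` minkowski_sum K (cball b s)) :
  phi_mod f r <= 2 * s.
Proof.
have [G hG] := choice (riesz_step hX).
pose u n := G (iterseq G n).
have un : forall n, `|u n| = 1 by move=> n; exact: (hG _).1.
have sep0 : forall n m, (m < n)%N -> 1 <= `|u n - u m|.
  move=> n m hmn.
  have := (hG (iterseq G n)).2 (fun j => (j == m)%:R).
  by rewrite lcf_nth ?size_iterseq // nth_iterseq.
have sep : forall n m, n <> m -> 1 <= `|u n - u m|.
  move=> n m /eqP; rewrite neq_ltn => /orP [h|h]; last exact: sep0.
  by rewrite distrC; apply: sep0.
pose x n := a + r *: u n.
have hx : forall n, minkowski_sum K (cball b s) (f (x n)).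
  move=> n; apply: hf; exists (x n) => //.
  rewrite /cball /closed_ball_ /= /x opprD addrA subrr sub0r normrN normrZ un mulr1.
  by rewrite gtr0_norm.
have [kb hkb] := choice (fun n => (fun '(ex_intro k (ex_intro bb h)) =>
   ex_intro (fun p : Y * Y => K p.1 /\ cball b s p.2 /\ f (x n) = p.1 + p.2) (k, bb) h) (hx n)).
have [p hp] := compact_cluster_seq hK (fun n => (hkb n).1).
pose E := [set d | exists x y : X, `|x - y| >= r /\ d = `|f x - f y|].
have lbE : has_lbound E by exists 0 => y [x0 [y0 [_ ->]]]; exact: normr_ge0.
rewrite /phi_mod -/E.
apply/ler_addgt0Pr => e e0.
have e2 : 0 < e / 2 by rewrite divr_gt0.
have [n1 [_ h1]] := hp (e/2) e2 0%N.
have [n2 [h12 h2]] := hp (e/2) e2 n1.+1.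
have ne : n2 <> n1 by move=> h; rewrite h ltnn in h12.
have EE : E `|f (x n2) - f (x n1)|.
  exists (x n2), (x n1); split => //.
  have -> : x n2 - x n1 = r *: (u n2 - u n1).
    by rewrite /x opprD addrACA subrr add0r scalerBr.
  rewrite normrZ gtr0_norm // -{1}(mulr1 r); apply: ler_wpM2l; [exact: ltW|exact: sep].
apply: le_trans (ge_inf lbE EE) _.
have [_ [hb2 ->]] := hkb n2.
have [_ [hb1 ->]] := hkb n1.
move: hb1 hb2; rewrite /cball /closed_ball_ /= => hb1 hb2.
set k1 := (kb n1).1; set k2 := (kb n2).1; set b1 := (kb n1).2; set b2 := (kb n2).2.
have -> : k2 + b2 - (k1 + b1) = ((k2 - p) + (p - k1)) + ((b2 - b) + (b - b1)).
  by rewrite [k2 - p + _]addrA subrK [b2 - b + _]addrA subrK opprD addrACA.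
apply: le_trans (ler_normD _ _) _.
have t1 := ler_normD (k2 - p) (p - k1).
have t2 := ler_normD (b2 - b) (b - b1).
rewrite (distrC k2) (distrC b2) in t1 t2.
lra.
Qed.
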